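(* Let $M\in\mathrm{Mat}(2,\mathbb{Z})$ with $\mathrm{mgcd}(M)=\mu\neq0$, and let $C=\begin{pmatrix}0&-D\\1&T\end{pmatrix}$ with $D=\det(M)$, $T=\mathrm{trace}(M)$ be its companion matrix. Then for all integers $n\ge2$ with $\gcd(n,\mu)=1$, the reductions of $M$ and $C$ mod $n$ are $\mathrm{Mat}(2,\mathbb{Z}_n)^\times$-conjugate. In this case, $M$ and $C$ share the same local statistics on $L_n$.
   Context: For $M=\begin{pmatrix}a&b\\c&d\end{pmatrix}\in\mathrm{Mat}(2,\mathbb{Z})$, $\mathrm{mgcd}(M)=\gcd(b,c,d-a)\ge0$ (equal to $0$ iff $b=c=d-a=0$). $\mathbb{Z}_n=\mathbb{Z}/n\mathbb{Z}$ and $\mathrm{Mat}(2,\mathbb{Z}_n)^\times$ is the group of invertible $2\times2$ matrices over $\mathbb{Z}_n$. $L_n=\{(\frac{k}{n},\frac{\ell}{n}):0\le k,\ell<n\}\subset\mathbb{T}^2=\mathbb{R}^2/\mathbb{Z}^2$, on which an integer matrix acts by multiplication mod $1$. Two integer matrices have the same local statistics on $L_n$ if the directed pseudo-graphs on $L_n$ they induce (vertices the points of $L_n$, a directed edge from $x$ to $Mx$) are isomorphic as graphs. *)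

(* Defs.v *)
From HB Require Import structures.
From mathcomp Require Import all_boot all_order all_algebra.
Set Implicit Arguments. Unset Strict Implicit. Unset Printing Implicit Defensive.
Import Order.TTheory GRing.Theory Num.Theory.
Local Open Scope ring_scope.

Definition mgcd (M : 'M[int]_2) : int :=
  gcdz (gcdz (M 0 1) (M 1 0)) (M 1 1 - M 0 0).

Definition companion (M : 'M[int]_2) : 'M[int]_2 :=
  \matrix_(i < 2, j < 2)
    if (i == 0) && (j == 0) then 0
    else if (i == 0) then - \det M
    else if (j == 0) then 1
    else \tr M.

(* reduction mod n of an integer matrix; used for n >= 2 (so 'Z_n = Z/nZ) *)
Definition red_mx (n : nat) (M : 'M[int]_2) : 'M['Z_n]_2 :=
  map_mx (fun z : int => z%:~R) M.

(* The grid L_n = {(k/n, l/n) : 0 <= k,l < n} in T^2, where the point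
   (k/n, l/n) is encoded by the pair (k, l) : 'Z_n * 'Z_n  (n >= 2). *)
Definition Lgrid (n : nat) : finType := ('Z_n * 'Z_n)%type.

(* action of an integer matrix on L_n by multiplication mod 1:
   M (k/n, l/n) = ((a k + b l)/n, (c k + d l)/n) mod 1, i.e.
   (k, l) |-> (a k + b l mod n, c k + d l mod n). *)
Definition torus_act (n : nat) (M : 'M[int]_2) (x : Lgrid n) : Lgrid n :=
  ((M 0 0)%:~R * x.1 + (M 0 1)%:~R * x.2,
   (M 1 0)%:~R * x.1 + (M 1 1)%:~R * x.2).

Definition edge (n : nat) (M : 'M[int]_2) : rel (Lgrid n) :=
  fun x y => @torus_act n M x == y.

Definition same_local_stats (n : nat) (M N : 'M[int]_2) : Prop :=
  exists f : Lgrid n -> Lgrid n,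
    bijective f /\ forall x y, @edge n M x y = @edge n N (f x) (f y).

Definition GL_conj (n : nat) (A B : 'M['Z_n]_2) : Prop :=
  exists P : 'M['Z_n]_2, P \in unitmx /\ P *m A *m invmx P = B.

(* Main.v *)
Require Import Defs.
From HB Require Import structures.
From mathcomp Require Import all_boot all_order all_algebra.
Import Order.TTheory GRing.Theory Num.Theory.
From mathcomp Require Import ring.
Local Open Scope ring_scope.

Lemma sum2 (R : nmodType) (F : 'I_2 -> R) : \sum_(i < 2) F i = F 0 + F 1.
Proof.
rewrite !big_ord_recl big_ord0 addr0; congr (F _ + F _); exact/val_inj.
Qed.

Lemma det2 (R : comNzRingType) (A : 'M[R]_2) :
  \det A = A 0 0 * A 1 1 - A 0 1 * A 1 0.
Proof.
rewrite (expand_det_row _ 0) sum2 /cofactor !det_mx11 !mxE /=.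
rewrite expr0 expr1 mul1r mulN1r.
have -> : lift 0 (0 : 'I_1) = 1 by apply/val_inj.
have -> : lift 1 (0 : 'I_1) = 0 by apply/val_inj.
by rewrite mulrN.
Qed.

Lemma tr2 (R : comNzRingType) (A : 'M[R]_2) : \tr A = A 0 0 + A 1 1.
Proof. by rewrite /mxtrace sum2. Qed.

Lemma dvdFp (p : nat) (z : int) : prime p ->
  (p %| `|z|)%N = ((z%:~R : 'F_p) == 0).
Proof. move=> pp; rewrite -(dvdz_pcharf (pchar_Fp pp)); by []. Qed.

Lemma part_dvd_prime (pi : nat_pred) (n p : nat) : (0 < n)%N -> prime p -> (p %| n)%N ->
  (p %| n`_pi)%N = (p \in pi).
Proof.
move=> n0 pp pn; apply/idP/idP.
  move=> h; have := part_pnat pi n; move/(pnatP _ (part_gt0 pi n)) => H.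
  exact: H.
move=> ppi; have := partn_dvd pi n0 pn.
by rewrite part_pnat_id // pnatE.
Qed.

Lemma good_vec (b c e : int) (n : nat) : (0 < n)%N ->
  coprime n `|gcdz (gcdz b c) e| ->
  exists x y : int, coprime n (absz (c * x ^+ 2 + e * x * y - b * y ^+ 2)%R).
Proof.
move=> n0 cop.
pose pi1 : nat_pred := [pred p : nat | ~~ (p %| absz c)%N].
pose pi2 : nat_pred := [pred p : nat | (p %| absz c)%N && ~~ (p %| absz b)%N].
exists (n`_pi2)%:Z, (n`_pi1)%:Z.
set f := (X in absz X).
apply/negPn/negP => ncop.
have g1 : (1 < gcdn n `|f|)%N.
  rewrite ltn_neqAle eq_sym ncop /= gcdn_gt0 n0 //.
set p := pdiv (gcdn n `|f|).
have pp : prime p by apply: pdiv_prime.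
have pg : (p %| gcdn n `|f|)%N by apply: pdiv_dvd.
have pn : (p %| n)%N by apply: dvdn_trans pg (dvdn_gcdl _ _).
have pf : (p %| `|f|)%N by apply: dvdn_trans pg (dvdn_gcdr _ _).
have hx := part_dvd_prime pi2 _ _ n0 pp pn.
have hy := part_dvd_prime pi1 _ _ n0 pp pn.
have hg : ~~ (p %| `|gcdz (gcdz b c) e|)%N.
  apply/negP => h.
  have : (p %| gcdn n `|gcdz (gcdz b c) e|)%N by rewrite dvdn_gcd pn h.
  by rewrite (eqP cop) dvdn1 => /eqP p1; rewrite p1 in pp.
have : (p%:Z %| gcdz (gcdz b c) e)%Z = (p %| `|gcdz (gcdz b c) e|)%N by [].
rewrite !dvdz_gcd (negbTE hg) => hg'.
have ex : forall z : int, (p%:Z %| z)%Z = (p %| `|z|)%N by [].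
move: hg' pf hx hy; rewrite !ex /= !dvdFp // -/p.
rewrite /f /= !(rmorphB, rmorphD, rmorphM, rmorphXn) /=.
rewrite (_ : (n`_pi2)%:Z%:~R = (n`_pi2)%:R) // (_ : (n`_pi1)%:Z%:~R = (n`_pi1)%:R) //.
idtac.
move=> H1 H2 hx hy.
have ex2 : forall k : nat, (p %| k)%N = ((k%:R : 'F_p) == 0).
  by move=> k; rewrite (dvdFp _ (Posz k) pp) pmulrn.
rewrite !ex2 !inE !dvdFp // in hx hy.
move: H1 H2 hx hy.
set X : 'F_p := (n`_pi2)%:R; set Y : 'F_p := (n`_pi1)%:R.
set B : 'F_p := b%:~R; set C : 'F_p := c%:~R; set E : 'F_p := e%:~R.
have [C0|C0] := eqVneq C 0; have [B0|B0] := eqVneq B 0; rewrite /= => H1 H2 hx hy.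
- rewrite C0 B0 !(mul0r, mulr0, add0r, addr0, subr0, sub0r, oppr_eq0, mulf_eq0) in H2.
  rewrite /= in H1.
  by move: H2; rewrite H1 hx hy.
- rewrite C0 (eqP hx) !(mul0r, mulr0, add0r, addr0, subr0, sub0r, oppr_eq0, mulf_eq0) (negbTE B0) in H2.
  by move: H2; rewrite hy.
- rewrite (eqP hy) !(mul0r, mulr0, add0r, addr0, subr0, sub0r, oppr_eq0, mulf_eq0) (negbTE C0) in H2.
  by move: H2; rewrite hx.
- rewrite (eqP hy) !(mul0r, mulr0, add0r, addr0, subr0, sub0r, oppr_eq0, mulf_eq0) (negbTE C0) in H2.
  by move: H2; rewrite hx.
Qed.

Lemma ord2P (i : 'I_2) : i = 0 \/ i = 1.
Proof. case: i => [[|[|k]] Hk]; [left|right|]; try exact/val_inj. by []. Qed.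

Lemma unit_int (n : nat) (z : int) : (1 < n)%N -> coprime n `|z| ->
  (z%:~R : 'Z_n) \is a GRing.unit.
Proof.
move=> n1; case: z => k /= h.
  by rewrite -pmulrn unitZpE.
by rewrite NegzE mulrNz unitrN -pmulrn unitZpE.
Qed.

Definition colv {n : nat} (u : Lgrid n) : 'cV['Z_n]_2 :=
  \col_i (if i == 0 then u.1 else u.2).
Definition tv {n : nat} (w : 'cV['Z_n]_2) : Lgrid n := (w 0 0, w 1 0).

Lemma tvK n (u : Lgrid n) : tv (colv u) = u.
Proof. by case: u => u1 u2; rewrite /tv /colv !mxE. Qed.

Lemma colvK n (w : 'cV['Z_n]_2) : colv (tv w) = w.
Proof.
apply/matrixP => i j; rewrite /colv /tv mxE.
have -> : j = 0 by apply/val_inj; case: j => [[|]].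
by case: (ord2P i) => ->.
Qed.

Lemma act_mx n (M : 'M[int]_2) (u : Lgrid n) :
  @torus_act n M u = tv (red_mx n M *m colv u).
Proof.
by rewrite /torus_act /tv /red_mx !mxE !sum2 !mxE.
Qed.

Theorem proposition33 (M : 'M[int]_2) :
  mgcd M != 0 ->
  forall n : nat, (2 <= n)%N -> coprime n `|mgcd M|%N ->
    GL_conj (red_mx n M) (red_mx n (companion M)) /\
    same_local_stats n M (companion M).
Proof.
move=> _ n n2 cop.
have [x [y hxy]] := good_vec (M 0 1) (M 1 0) (M 1 1 - M 0 0) n (ltnW n2) cop.
pose Pz : 'M[int]_2 := \matrix_(i < 2, j < 2)
  if j == 0 then (if i == 0 then x else y)
  else (if i == 0 then M 0 0 * x + M 0 1 * y else M 1 0 * x + M 1 1 * y).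
have E1 : M *m Pz = Pz *m companion M.
  apply/matrixP => i j; rewrite !mxE !sum2 !mxE.
  case: (ord2P i) => ->; case: (ord2P j) => ->; rewrite /= ?det2 ?tr2; ring.
have E2 : \det Pz = M 1 0 * x ^+ 2 + (M 1 1 - M 0 0) * x * y - M 0 1 * y ^+ 2.
  rewrite det2 !mxE /=; ring.
pose P := red_mx n Pz.
have EAP : red_mx n M *m P = P *m red_mx n (companion M).
  by rewrite /P /red_mx -!map_mxM E1.
have Pu : P \in unitmx.
  rewrite unitmxE /P /red_mx det_map_mx E2; exact: unit_int.
split.
  exists (invmx P); split; first by rewrite unitmx_inv.
  by rewrite invmxK -mulmxA EAP mulKmx.
pose g (u : Lgrid n) : Lgrid n := tv (P *m colv u).
have key : forall u w, edge M (g u) (g w) = edge (companion M) u w.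
  move=> u w; rewrite /edge !act_mx /g colvK mulmxA EAP -mulmxA.
  apply/eqP/eqP => h.
    have := congr1 colv h; rewrite !colvK => h'.
    have := congr1 (mulmx (invmx P)) h'; rewrite !mulKmx // => ->.
    by rewrite tvK.
  by rewrite -h colvK.
have ginj : injective g.
  move=> u w h; have := congr1 colv h; rewrite /g !colvK => h'.
  have := congr1 (mulmx (invmx P)) h'; rewrite !mulKmx // => h''.
  by rewrite -(tvK _ u) h'' tvK.
case: (injF_bij ginj) => h gh hg.
exists h; split; first exact: (Bijective hg gh).
by move=> u w; rewrite -key !hg.
Qed.
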